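(* Let $G$ be a cyclic group of order $n\neq 4$ and let $\mathcal{A}$ be an $S$-ring over $G$ such that $\mathcal{A}=\mathbb{Z}G$ or $\mathcal{A}=\mathrm{Cyc}(K,G)$, where $K=\{\varepsilon,\sigma\}$ with $\varepsilon$ the identity and $\sigma:x\mapsto x^{-1}$. Suppose that $\varphi$ is an algebraic isomorphism from $\mathcal{A}$ to an $S$-ring $\mathcal{A}'$ over a finite abelian group $G'$. Then $G'\cong G$.
   Context: Let $G$ be a finite group with identity $e$; for $X\subseteq G$ write $\underline{X}=\sum_{x\in X}x\in\mathbb{Z}G$. An $S$-ring over $G$ is a subring $\mathcal{A}\subseteq\mathbb{Z}G$ for which there is a partition $\mathcal{S}(\mathcal{A})$ of $G$ (the basic sets) with $\{e\}\in\mathcal{S}(\mathcal{A})$, $X^{-1}\in\mathcal{S}(\mathcal{A})$ whenever $X\in\mathcal{S}(\mathcal{A})$, and $\mathcal{A}=\mathrm{Span}_{\mathbb{Z}}\{\underline{X}:X\in\mathcal{S}(\mathcal{A})\}$. Structure constants: $c^Z_{X,Y}$ is the number of $(x,y)\in X\times Y$ with $xy=z$ for fixed $z\in Z$. An algebraic isomorphism from $\mathcal{A}$ to an $S$-ring $\mathcal{A}'$ is a bijection $\varphi:\mathcal{S}(\mathcal{A})\to\mathcal{S}(\mathcal{A}')$ with $c^Z_{X,Y}=c^{Z^\varphi}_{X^\varphi,Y^\varphi}$ for all basic sets. For $K\leq\mathrm{Aut}(G)$, $\mathrm{Cyc}(K,G)$ is the $S$-ring over $G$ whose basic sets are the orbits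 of $K$ on $G$. *)

(* Defs.v *)
From mathcomp Require Import all_boot all_fingroup all_solvable.
Set Implicit Arguments. Unset Strict Implicit. Unset Printing Implicit Defensive.
Import GroupScope.

(* S-rings over a finite group gT (the group G is the whole type gT).
   An S-ring is identified with its set S of basic sets. *)

Definition sr_count (gT : finGroupType) (X Y : {set gT}) (z : gT) : nat :=
  #|[set p in setX X Y | p.1 * p.2 == z]|.

(* S is the partition of basic sets of an S-ring over gT:
   partition of G, {e} basic, closed under inversion, and the Z-span of the
   X̲ is closed under multiplication, i.e. each product X̲ Y̲ has coefficients
   constant on each basic set (this is literally "X̲ Y̲ is in the span"). *)
Definition is_Sring (gT : finGroupType) (S : {set {set gT}}) : Prop :=
  [/\ partition S [set: gT],
      [set 1] \in S,
      (forall X, X \in S -> X^-1 \in S) &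
      (forall X Y Z, X \in S -> Y \in S -> Z \in S ->
         forall z1 z2, z1 \in Z -> z2 \in Z -> sr_count X Y z1 = sr_count X Y z2)].

Definition sr_const (gT : finGroupType) (X Y Z : {set gT}) : nat :=
  sr_count X Y (repr Z).

Definition alg_iso (gT gT' : finGroupType) (S : {set {set gT}})
  (S' : {set {set gT'}}) (phi : {set gT} -> {set gT'}) : Prop :=
  [/\ {in S &, injective phi},
      phi @: S = S' &
      forall X Y Z, X \in S -> Y \in S -> Z \in S ->
        sr_const X Y Z = sr_const (phi X) (phi Y) (phi Z)].

(* the group ring ZG: all basic sets are singletons *)
Definition full_Sring (gT : finGroupType) : {set {set gT}} :=
  [set [set x] | x : gT].

Definition Cyc (gT : finGroupType) (K : {set {perm gT}}) : {set {set gT}} :=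
  [set orbit 'P K x | x : gT].

Definition inv_perm (gT : finGroupType) : {perm gT} := perm (@invg_inj gT).

Definition Kinv (gT : finGroupType) : {set {perm gT}} := [set 1; inv_perm gT].

(* Main.v *)
Require Import Defs.
From mathcomp Require Import all_boot all_fingroup all_solvable.
Set Implicit Arguments. Unset Strict Implicit. Unset Printing Implicit Defensive.

Section Gen.
Local Open Scope group_scope.
Variable gT : finGroupType.
Variable S : {set {set gT}}.
Hypothesis HS : is_Sring S.

Lemma sr_cover x : exists2 X, X \in S & x \in X.
Proof.
case: HS => /and3P[/eqP cov _ _] _ _ _.
have : x \in cover S by rewrite cov inE.
by case/bigcupP => X XS xX; exists X.
Qed.

Lemma sr_uniq X Y x : X \in S -> Y \in S -> x \in X -> x \in Y -> X = Y.
Proof.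
case: HS => /and3P[_ /trivIsetP tri _] _ _ _ XS YS xX xY.
apply/eqP; apply/negPn/negP => nXY.
by move: (tri X Y XS YS nXY) => /disjointFr => /(_ x xX); rewrite xY.
Qed.

Lemma sr_ne X : X \in S -> exists x, x \in X.
Proof.
case: HS => /and3P[_ _ n0] _ _ _ XS.
apply/set0Pn; apply: contraNneq n0 => <-; exact: XS.
Qed.

Lemma sr_pos X Y W x y : X \in S -> Y \in S -> W \in S ->
  x \in X -> y \in Y -> x * y \in W -> 0 < sr_const X Y W.
Proof.
case: HS => _ _ _ cst XS YS WS xX yY xyW.
rewrite /sr_const (cst X Y W XS YS WS _ (x * y) (mem_repr _ xyW) xyW).
apply/card_gt0P; exists (x, y); rewrite !inE /= xX yY /=; exact: eqxx.
Qed.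

Lemma sr_inv X Y W w : X \in S -> Y \in S -> W \in S ->
  0 < sr_const X Y W -> w \in W -> exists x y, [/\ x \in X, y \in Y & x * y = w].
Proof.
case: HS => _ _ _ cst XS YS WS.
rewrite /sr_const => pos wW.
rewrite (cst X Y W XS YS WS _ w (mem_repr _ wW) wW) in pos.
case/card_gt0P: pos => [[x y]]; rewrite !inE /= => /andP[/andP[xX yY] /eqP e].
by exists x, y.
Qed.

Lemma sr_one : [set 1 : gT] \in S.
Proof. by case: HS. Qed.

Lemma sr_V X : X \in S -> X^-1 \in S.
Proof. by case: HS => _ _ H _; apply: H. Qed.

Lemma count_inv (X : {set gT}) : sr_count X X^-1 1 = #|X|.
Proof.
rewrite /sr_count.
have -> : [set p in setX X X^-1 | p.1 * p.2 == 1] = [set (x, x^-1) | x in X].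
  apply/setP => [[x y]]; rewrite !inE /=; apply/idP/imsetP.
    case/andP=> /andP[xX _] /eqP e; exists x => //.
    by rewrite -(mulKg x y) e mulg1.
  by case=> z zX [-> ->]; rewrite zX invgK zX mulgV eqxx.
by apply: card_imset => x y [].
Qed.

End Gen.

Section Iso.
Local Open Scope group_scope.
Variables gT gT' : finGroupType.
Variable S : {set {set gT}}.
Variable S' : {set {set gT'}}.
Variable phi : {set gT} -> {set gT'}.
Hypothesis HS : is_Sring S.
Hypothesis HS' : is_Sring S'.
Hypothesis Hphi : alg_iso S S' phi.

Lemma phi_mem X : X \in S -> phi X \in S'.
Proof. case: Hphi => _ <- _ XS; exact: imset_f. Qed.

Lemma phi_pre X' : X' \in S' -> exists2 X, X \in S & X' = phi X.
Proof. case: Hphi => _ <- _ /imsetP[X XS ->]; by exists X. Qed.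

Lemma phi_inj X Y : X \in S -> Y \in S -> phi X = phi Y -> X = Y.
Proof. by case: Hphi => inj _ _; apply: inj. Qed.

Lemma phi_const X Y Z : X \in S -> Y \in S -> Z \in S ->
  sr_const X Y Z = sr_const (phi X) (phi Y) (phi Z).
Proof. by case: Hphi => _ _ H; apply: H. Qed.

Lemma phi1 : phi [set 1] = [set 1].
Proof.
have [Y YS eY] := phi_pre (sr_one HS').
have [y yY] := sr_ne HS YS.
have pos : 0 < sr_const [set 1] Y Y.
  by apply: (sr_pos HS (x := 1) (y := y)) => //; rewrite ?set11 ?mul1g // sr_one.
rewrite (phi_const (sr_one HS) YS YS) -eY in pos.
have [x [z [xE /set1P -> e]]] :=
  sr_inv HS' (phi_mem (sr_one HS)) (sr_one HS') (sr_one HS') pos (set11 1).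
rewrite mulg1 in e; rewrite e in xE.
exact: (sr_uniq HS' (phi_mem (sr_one HS)) (sr_one HS') xE (set11 1)).
Qed.

Lemma phiV X : X \in S -> phi (X^-1) = (phi X)^-1.
Proof.
move=> XS; have [x xX] := sr_ne HS XS.
have pos : 0 < sr_const X X^-1 [set 1].
  apply: (sr_pos HS (x := x) (y := x^-1)) => //; rewrite ?sr_V ?sr_one //.
    by rewrite inE invgK.
  by rewrite mulgV set11.
rewrite (phi_const XS (sr_V HS XS) (sr_one HS)) phi1 in pos.
have [u [v [uX vX e]]] :=
  sr_inv HS' (phi_mem XS) (phi_mem (sr_V HS XS)) (sr_one HS') pos (set11 1).
apply: (sr_uniq HS' (phi_mem (sr_V HS XS)) (sr_V HS' (phi_mem XS)) vX).
by rewrite inE; move/eqP: e; rewrite -eq_invg_mul => /eqP <-; rewrite invgK.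
Qed.

Lemma phi_card X : X \in S -> #|phi X| = #|X|.
Proof.
move=> XS; rewrite -count_inv -(count_inv X).
have := phi_const XS (sr_V HS XS) (sr_one HS).
by rewrite /sr_const phi1 phiV // !repr_set1 => <-.
Qed.

End Iso.

Section CaseA.
Local Open Scope group_scope.
Variables gT gT' : finGroupType.
Variable S : {set {set gT}}.
Variable S' : {set {set gT'}}.
Variable phi : {set gT} -> {set gT'}.
Hypothesis HS : is_Sring S.
Hypothesis HS' : is_Sring S'.
Hypothesis Hphi : alg_iso S S' phi.

Lemma caseA : (forall X, X \in S -> #|X| = 1%N) -> [set: gT] \isog [set: gT'].
Proof.
move=> single.
have S1 x : [set x] \in S.
  have [X XS xX] := sr_cover HS x.
  move: (single X XS) => /eqP/cards1P [y eX].
  by move: xX; rewrite eX => /set1P ->; rewrite -eX.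
pose f x := repr (phi [set x]).
have ef x : phi [set x] = [set f x].
  have : #|phi [set x]| == 1%N.
    by rewrite (phi_card HS HS' Hphi (S1 x)) (single _ (S1 x)).
  move=> /cards1P [y ey].
  by rewrite /f ey repr_set1.
have fM : {in [set: gT] &, {morph f : x y / x * y}}.
  move=> x y _ _.
  have pos := sr_pos HS (S1 x) (S1 y) (S1 (x * y)) (set11 x) (set11 y) (set11 _).
  rewrite (phi_const Hphi (S1 x) (S1 y) (S1 (x * y))) in pos.
  have fin : f (x * y) \in phi [set x * y] by rewrite ef set11.
  have [u [v [ux vy e]]] := sr_inv HS' (phi_mem Hphi (S1 x)) (phi_mem Hphi (S1 y))
        (phi_mem Hphi (S1 (x * y))) pos fin.
  by move: ux vy; rewrite !ef => /set1P <- /set1P <-.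
have finj x y : f x = f y -> x = y.
  move=> e; apply/set1_inj/(phi_inj Hphi (S1 x) (S1 y)); by rewrite !ef e.
apply/isogP; exists (Morphism fM).
  by apply/injmP => x y _ _; apply: finj.
rewrite morphimEdom; apply/setP => u; rewrite inE; apply/imsetP.
have [X' X'S uX'] := sr_cover HS' u.
have [X XS eX] := phi_pre Hphi X'S.
have [x xX] := sr_ne HS XS.
have eXx : X = [set x] by apply: (sr_uniq HS XS (S1 x) xX (set11 x)).
exists x; first by rewrite inE.
by move: uX'; rewrite eX eXx ef => /set1P.
Qed.
End CaseA.

Section Pow.
Local Open Scope group_scope.
Variable gT : finGroupType.
Implicit Types c x y : gT.

Definition UU c k : {set gT} := [set c ^+ k; (c ^+ k)^-1].

Lemma UU_step c m x y : x \in UU c 1 -> y \in UU c m.+1 ->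
  x * y \in UU c m.+2 :|: UU c m.
Proof.
rewrite /UU expg1 !inE => /orP[]/eqP-> /orP[]/eqP->.
- by rewrite -expgS eqxx.
- by rewrite expgSr invMg mulKVg eqxx !orbT.
- by rewrite expgS mulKg eqxx !orbT.
- by rewrite -invMg -expgSr eqxx !orbT.
Qed.

Lemma UU_eq c m : c^-1 != c -> c ^+ m.+2 \in UU c m -> UU c m.+2 = UU c m.
Proof.
move=> nc; rewrite /UU !inE => /orP[]/eqP e.
  move: e; rewrite -addn2 expgD -{2}(mulg1 (c ^+ m)) => /mulgI /eqP.
  by rewrite expgS expg1 -eq_invg_mul (negbTE nc).
by rewrite e invgK setUC.
Qed.

Lemma memVV (A : {set gT}) z : z \in A -> z^-1 \in A^-1.
Proof. by rewrite inE invgK. Qed.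

Lemma set2V x : [set x; x^-1]^-1 = [set x; x^-1].
Proof.
apply/setP => y; rewrite !inE eq_invg_sym (inj_eq invg_inj); exact: orbC.
Qed.

Lemma orbit_Kinv x : orbit 'P (Kinv gT) x = [set x; x^-1].
Proof.
rewrite orbitE /Kinv imsetU !imset_set1 /=.
by rewrite /aperm perm1 /inv_perm permE.
Qed.

End Pow.

Section CaseB.
Local Open Scope group_scope.
Variables gT gT' : finGroupType.
Variable S : {set {set gT}}.
Variable S' : {set {set gT'}}.
Variable phi : {set gT} -> {set gT'}.
Hypothesis HS : is_Sring S.
Hypothesis HS' : is_Sring S'.
Hypothesis Hphi : alg_iso S S' phi.
Hypothesis Habel : abelian [set: gT'].
Hypothesis HSC : S = [set [set x; x^-1] | x : gT].
Variable g : gT.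
Hypothesis Hg : [set: gT] = <[g]>.
Hypothesis n3 : 2 < #[g].
Hypothesis n4 : #[g] != 4.

Let T k := UU g k.

Lemma TS k : T k \in S.
Proof. by rewrite HSC; apply: imset_f. Qed.

Lemma Sform X : X \in S -> exists k, X = T k.
Proof.
rewrite HSC => /imsetP [x _ ->].
have : x \in <[g]> by rewrite -Hg inE.
by case/cycleP => k ->; exists k.
Qed.

Lemma Tsym k : (phi (T k))^-1 = phi (T k).
Proof. by rewrite -(phiV HS HS' Hphi (TS k)) /T /UU set2V. Qed.


Lemma g2 : g ^+ 2 != 1.
Proof.
apply/negP => /eqP e; have : #[g] %| 2 by rewrite order_dvdn e.
by move=> H; have := dvdn_leq (isT : 0 < 2) H; rewrite leqNgt n3.
Qed.

Lemma ginv : g^-1 != g.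
Proof. by rewrite eq_invg_mul; have := g2; rewrite expgS expg1. Qed.

Lemma choose_a : exists a : gT', a^-1 != a /\ phi (T 1) = UU a 1.
Proof.
have cA : #|phi (T 1)| == 2.
  by rewrite (phi_card HS HS' Hphi (TS 1)) /T /UU expg1 cards2; have := ginv; rewrite eq_sym => ->.
case/cards2P: cA => x [y [nxy eA]].
have Ainv z : z \in phi (T 1) -> z^-1 \in phi (T 1).
  by move=> zA; have := memVV zA; rewrite Tsym.
have xA : x \in phi (T 1) by rewrite eA set21.
have yA : y \in phi (T 1) by rewrite eA set22.
have := Ainv _ xA; rewrite eA !inE => /orP[/eqP xx | /eqP xy].
  exfalso.
  have := Ainv _ yA; rewrite eA !inE => /orP[/eqP yx | /eqP yy].
    by move/negP: nxy; apply; rewrite -{1}xx -yx invgK.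
  have comm (u v : gT') : commute u v.
    by move/centsP: Habel => H; exact: (H u (in_setT u) v (in_setT v)).
  have gT1 : g \in T 1 by rewrite /T /UU expg1 set21.
  have g2T : g * g \in T 2 by rewrite /T /UU expgS expg1 set21.
  have pos := sr_pos HS (TS 1) (TS 1) (TS 2) gT1 gT1 g2T.
  rewrite (phi_const Hphi (TS 1) (TS 1) (TS 2)) in pos.
  have not1 : 1 \notin phi (T 2).
    apply/negP => H1.
    have e : phi (T 2) = phi [set 1].
      rewrite (phi1 HS HS' Hphi).
      exact: (sr_uniq HS' (phi_mem Hphi (TS 2)) (sr_one HS') H1 (set11 1)).
    have eT := phi_inj Hphi (TS 2) (sr_one HS) e.
    have : g ^+ 2 \in [set 1] by rewrite -eT /T /UU set21.
    by move/set1P => /eqP; rewrite (negbTE g2).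
  have xx1 : x * x = 1 by rewrite -{1}xx mulVg.
  have yy1 : y * y = 1 by rewrite -{1}yy mulVg.
  have sub : phi (T 2) \subset [set x * y].
    apply/subsetP => v vV.
    have [p [q [pA qA e]]] := sr_inv HS' (phi_mem Hphi (TS 1)) (phi_mem Hphi (TS 1))
       (phi_mem Hphi (TS 2)) pos vV.
    move: pA qA e vV; rewrite eA !inE => /orP[]/eqP-> /orP[]/eqP-> <-.
    - by rewrite xx1 (negbTE not1).
    - by rewrite eqxx.
    - by rewrite comm eqxx.
    - by rewrite yy1 (negbTE not1).
  have := subset_leq_card sub; rewrite cards1 (phi_card HS HS' Hphi (TS 2)) /T /UU cards2.
  rewrite ltnS leqn0 eqb0 negbK eq_sym eq_invg_mul -expgD => /eqP e4.
  have d4 : #[g] %| 4 by rewrite order_dvdn e4.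
  have o4 := dvdn_leq (isT : 0 < 4) d4.
  move: n3 n4 d4 o4; case: #[g] => [|[|[|[|[|k]]]]] //.
exists x; split; first by rewrite xy eq_sym.
by rewrite /UU expg1 xy.
Qed.


Lemma T0 : T 0 = [set 1].
Proof. by rewrite /T /UU expg0 invg1 setUid. Qed.

Lemma Qall (a : gT') : a^-1 != a -> phi (T 1) = UU a 1 ->
  forall m, phi (T m) = UU a m /\ phi (T m.+1) = UU a m.+1.
Proof.
move=> na ea; elim => [|m [Qm Qm1]].
  by split=> //; rewrite T0 (phi1 HS HS' Hphi) /UU expg0 invg1 setUid.
split=> //.
set V := phi (T m.+2).
have VS : V \in S' := phi_mem Hphi (TS m.+2).
have gT1 : g \in T 1 by rewrite /T /UU expg1 set21.
have gm1 : g ^+ m.+1 \in T m.+1 by rewrite /T /UU set21.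
have gm2 : g * g ^+ m.+1 \in T m.+2 by rewrite /T /UU -expgS set21.
have pos := sr_pos HS (TS 1) (TS m.+1) (TS m.+2) gT1 gm1 gm2.
rewrite (phi_const Hphi (TS 1) (TS m.+1) (TS m.+2)) in pos.
have Vsub v : v \in V -> v \in UU a m.+2 :|: UU a m.
  move=> vV.
  have [p [q [pA qA e]]] := sr_inv HS' (phi_mem Hphi (TS 1)) (phi_mem Hphi (TS m.+1))
       VS pos vV.
  rewrite -e; apply: UU_step; by [rewrite -ea | rewrite -Qm1].
have [W' W'S aW'] := sr_cover HS' (a ^+ m.+2).
have [W WS eW'] := phi_pre Hphi W'S.
have [j eW] := Sform WS.
have aT1 : a \in phi (T 1) by rewrite ea /UU expg1 set21.
have am1 : a ^+ m.+1 \in phi (T m.+1) by rewrite Qm1 /UU set21.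
have aW2 : a * a ^+ m.+1 \in W' by rewrite -expgS.
have pos' := sr_pos HS' (phi_mem Hphi (TS 1)) (phi_mem Hphi (TS m.+1)) W'S aT1 am1 aW2.
rewrite eW' eW -(phi_const Hphi (TS 1) (TS m.+1) (TS j)) in pos'.
have gj : g ^+ j \in T j by rewrite /T /UU set21.
have [p [q [pA qA e]]] := sr_inv HS (TS 1) (TS m.+1) (TS j) pos' gj.
have := UU_step pA qA; rewrite e inE => /orP[] gjin.
  have eTj : T j = T m.+2 := sr_uniq HS (TS j) (TS m.+2) gj gjin.
  have aV : a ^+ m.+2 \in V by rewrite /V -eTj -eW -eW'.
  apply/eqP; rewrite eqEsubset; apply/andP; split; apply/subsetP => v.
    move=> vV; have := Vsub v vV; rewrite inE => /orP[] // vm.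
    have eV : V = phi (T m).
      by apply: (sr_uniq HS' VS (phi_mem Hphi (TS m)) vV); rewrite Qm.
    have am : a ^+ m.+2 \in UU a m by rewrite -Qm -eV.
    by rewrite (UU_eq na am).
  rewrite /UU !inE => /orP[]/eqP ->; first exact: aV.
  by have := memVV aV; rewrite /V Tsym.
have eTj : T j = T m := sr_uniq HS (TS j) (TS m) gj gjin.
have am : a ^+ m.+2 \in UU a m by rewrite -Qm -eTj -eW -eW'.
have [v vV] := sr_ne HS' VS.
have vm : v \in phi (T m) by have := Vsub v vV; rewrite (UU_eq na am) setUid Qm.
have eV : V = phi (T m) := sr_uniq HS' VS (phi_mem Hphi (TS m)) vV vm.
by rewrite eV Qm (UU_eq na am).
Qed.

Lemma caseB : [set: gT] \isog [set: gT'].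
Proof.
have [a [na ea]] := choose_a.
have Q m : phi (T m) = UU a m := (Qall na ea m).1.
have HG' : [set: gT'] = <[a]>.
  apply/eqP; rewrite eqEsubset subsetT andbT; apply/subsetP => u _.
  have [X' X'S uX'] := sr_cover HS' u.
  have [X XS eX] := phi_pre Hphi X'S.
  have [k ek] := Sform XS.
  move: uX'; rewrite eX ek Q /UU !inE => /orP[]/eqP ->.
    exact: mem_cycle.
  rewrite groupV; exact: mem_cycle.
have U1 k : UU a k = [set 1] -> g ^+ k = 1.
  move=> e.
  have e2 : phi (T k) = phi [set 1] by rewrite Q e (phi1 HS HS' Hphi).
  have eT := phi_inj Hphi (TS k) (sr_one HS) e2.
  have : g ^+ k \in [set 1] by rewrite -eT /T /UU set21.
  by move/set1P.
have oa : #[a] = #[g].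
  apply/eqP; rewrite eqn_dvd; apply/andP; split.
    rewrite order_dvdn.
    have e : UU a #[g] = [set 1].
      by rewrite -Q /T /UU expg_order invg1 setUid (phi1 HS HS' Hphi).
    have : a ^+ #[g] \in [set 1] by rewrite -e /UU set21.
    by move/set1P => ->.
  rewrite order_dvdn; apply/eqP/U1.
  by rewrite /UU expg_order invg1 setUid.
have cG : cyclic [set: gT] by apply/cyclicP; exists g.
rewrite (isog_cyclic_card _ cG); apply/andP; split.
  by apply/cyclicP; exists a.
by rewrite /= HG' Hg -!orderE oa.
Qed.

End CaseB.

Theorem lemma5p1 (gT gT' : finGroupType) (S : {set {set gT}})
  (S' : {set {set gT'}}) (phi : {set gT} -> {set gT'}) :
  cyclic [set: gT] -> #|[set: gT]| <> 4 ->
  is_Sring S -> (S = full_Sring gT \/ S = Cyc (Kinv gT)) ->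
  abelian [set: gT'] -> is_Sring S' -> alg_iso S S' phi ->
  [set: gT] \isog [set: gT'].
Proof.
move=> cyc n4 HS HSor Hab HS' Hphi.
case: HSor => [HSf | HSc].
  apply: (caseA HS HS' Hphi) => X XS.
  by rewrite HSf in XS; case/imsetP: XS => x _ ->; exact: cards1.
have HSC : S = [set [set x; (x^-1)%g] | x : gT].
  by rewrite HSc /Cyc; apply: eq_imset => x; exact: orbit_Kinv.
case/cyclicP: (cyc) => g Hg.
have og : #[g]%g = #|[set: gT]| by rewrite Hg orderE.
case: (ltnP 2 #[g]%g) => [n3|n2].
  by apply: (caseB HS HS' Hphi Hab HSC Hg n3); rewrite og; apply/eqP.
apply: (caseA HS HS' Hphi) => X XS.
rewrite HSC in XS; case/imsetP: XS => x _ ->.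
have d2 : #[g]%g %| 2.
  by move: n2 (order_gt0 g); case: #[g]%g => [|[|[|k]]].
have dx : #[x]%g %| 2.
  apply: dvdn_trans d2; rewrite og; apply: order_dvdG; exact: in_setT.
move: dx; rewrite order_dvdn => x2.
have -> : (x^-1)%g = x.
  by apply/eqP; rewrite eq_invg_mul; move: x2; rewrite expgS expg1.
by rewrite setUid cards1.
Qed.
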